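(* Let $f:(\mathbb{R}^d)^n\to\mathbb{R}$ be a random layered network of the form $f=g\circ F_W$, where $F_W$ is a regular random convolutional layer with $d$ input channels and $g$ is a random layered network independent of $W$. Then $f$ is $\mathbb{SO}(d)$-invariant: for every $U\in\mathbb{SO}(d)$, the random function $Uf$ defined by $(Uf)(\vec{\mathbf{x}})=f(U^{-1}\vec{\mathbf{x}})$ has the same distribution as $f$.
   Context: $\mathbb{SO}(d)$ acts on $(\mathbb{R}^d)^n$ by $U\cdot(\mathbf{x}_1,\ldots,\mathbf{x}_n)=(U\mathbf{x}_1,\ldots,U\mathbf{x}_n)$. A layer is a map $\mathbf{x}\mapsto\sigma(W\mathbf{x})$ ($\sigma:\mathbb{R}\to\mathbb{R}$ applied coordinatewise); a layered network is a composition of layers. A convolutional layer of width $w$, stride $s$ (with $s\mid n-w$), $d_1$ input channels and $d_2\times(d_1w)$ weight matrix $W$ is $F_W(\vec{\mathbf{x}})=\left(\sigma(WT_{0}(\vec{\mathbf{x}})),\ldots,\sigma(WT_{\frac{n-w}{s}}(\vec{\mathbf{x}}))\right)$, where $T_i(\vec{\mathbf{x}})=(\mathbf{x}_{is+1},\ldots,\mathbf{x}_{is+w})\in\mathbb{R}^{d_1w}$. It is a regular random convolutional layer if $W$ is random and for every orthogonal $(d_1w)\times(d_1w)$ matrix $U$, $W$ and $WU$ have the same distribution. *)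

(* Defs.v *)
From HB Require Import structures.
From mathcomp Require Import all_boot all_order all_algebra.
From mathcomp Require Import all_classical all_reals all_analysis.
Set Implicit Arguments.
Unset Strict Implicit.
Unset Printing Implicit Defensive.
Import Order.TTheory GRing.Theory Num.Theory.
Local Open Scope classical_set_scope.
Local Open Scope ring_scope.

Section Defs.
Context {R : realType}.

Definition orthogonal_mx n (U : 'M[R]_n) : Prop := U^T *m U = 1%:M.
Definition SO_mx n (U : 'M[R]_n) : Prop := orthogonal_mx U /\ \det U = 1.

Definition pts_act d n (U : 'M[R]_d) (x : n.-tuple 'cV[R]_d)
  : n.-tuple 'cV[R]_d := map_tuple (mulmx U) x.

(** T_i(x) = (x_{is+1}, ..., x_{is+w}) in R^{d w} (concatenation; the
    0-indexed point i*s+j sits in block j). *)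
Definition patch d n (w s : nat) (x : n.-tuple 'cV[R]_d) (i : nat)
  : 'cV[R]_(w * d) :=
  (mxvec (\matrix_(j < w, c < d) (nth 0 (tval x) (i * s + j)) c ord0))^T.

Definition nwin (n w s : nat) : nat := ((n - w) %/ s).+1.

(** Convolutional layer F_W(x) = (σ(W T_0 x), ..., σ(W T_{(n-w)/s} x)),
    output flattened (concatenated) into R^{nwin * d2}. *)
Definition conv_layer d n (w s d2 : nat) (sigma : R -> R)
  (W : 'M[R]_(d2, w * d)) (x : n.-tuple 'cV[R]_d)
  : 'cV[R]_(nwin n w s * d2) :=
  (mxvec (\matrix_(i < nwin n w s, c < d2)
            (map_mx sigma (W *m patch w s x i)) c ord0))^T.

Definition mx_sigma m k : set (set 'M[R]_(m, k)) :=
  <<s \bigcup_(i in [set: 'I_m]) \bigcup_(j in [set: 'I_k])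
        preimage_set_system setT (fun M : 'M[R]_(m, k) => M i j) measurable >>.

Definition fun_sigma (X : Type) : set (set (X -> R)) :=
  <<s \bigcup_(x in [set: X])
        preimage_set_system setT (fun h : X -> R => h x) measurable >>.

Context {dT : measure_display} {T : measurableType dT}.

Definition random_mx m k (W : T -> 'M[R]_(m, k)) : Prop :=
  forall i j, measurable_fun setT (fun w => W w i j).

Definition mx_gen m k (W : T -> 'M[R]_(m, k)) : set (set T) :=
  preimage_set_system setT W (@mx_sigma m k).

(** Random layered networks from R^k to R: a fixed architecture with fixed
    (measurable) activations and random weight matrices.  [rnet k] is a
    composition of layers x |-> sigma (W x); [ROut] reads the single
    coordinate of R^1. *)
Inductive rnet : nat -> Type :=
| ROut : rnet 1
| RLayer (k k' : nat) (sigma : R -> R) (W : T -> 'M[R]_(k', k)) (N : rnet k')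
  : rnet k.

Fixpoint rnet_eval k (N : rnet k) (om : T) : 'cV[R]_k -> R :=
  match N in rnet k0 return 'cV[R]_k0 -> R with
  | ROut => fun y => y ord0 ord0
  | RLayer _ _ sigma W N' => fun y => rnet_eval N' om (map_mx sigma (W om *m y))
  end.

Fixpoint rnet_ok k (N : rnet k) : Prop :=
  match N with
  | ROut => True
  | RLayer _ _ sigma W N' =>
      [/\ measurable_fun setT sigma, random_mx W & rnet_ok N']
  end.

Fixpoint rnet_events k (N : rnet k) : set (set T) :=
  match N with
  | ROut => set0
  | RLayer _ _ _ W N' => mx_gen W `|` rnet_events N'
  end.

Definition rnet_sigma k (N : rnet k) : set (set T) := <<s rnet_events N >>.

Variable P : probability T R.

Definition indep_sigma (F G : set (set T)) : Prop :=
  forall A B, F A -> G B -> P (A `&` B) = (P A * P B)%E.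

Definition same_law (X : Type) (G : set (set X)) (X1 X2 : T -> X) : Prop :=
  forall A, G A -> P (X1 @^-1` A) = P (X2 @^-1` A).

Definition regular_random_mx m k (W : T -> 'M[R]_(m, k)) : Prop :=
  random_mx W /\
  forall U : 'M[R]_k, orthogonal_mx U ->
    same_law (@mx_sigma m k) W (fun om => W om *m U).

End Defs.

(* Main.v *)
Require Import Defs.
From HB Require Import structures.
From mathcomp Require Import all_boot all_order all_algebra.
From mathcomp Require Import all_classical all_reals all_analysis.
From mathcomp Require Import measurable_realfun.
Import Order.TTheory GRing.Theory Num.Theory.
Local Open Scope classical_set_scope.
Local Open Scope ring_scope.

Section Aux.
Import numFieldNormedType.Exports.

Lemma pf_unique (R : realType) d d' (T : measurableType d) (X : measurableType d')
  (P : probability T R) (f f' : T -> X) (mf : measurable_fun setT f)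
  (mf' : measurable_fun setT f') (G : set (set X)) :
  d'.-measurable = <<s G >> ->
  setI_closed G -> G setT -> (forall A, G A -> P (f @^-1` A) = P (f' @^-1` A)) ->
  forall A, measurable A -> P (f @^-1` A) = P (f' @^-1` A).
Proof.
move=> mG sG GT hG A mA.
have := @measure_unique _ _ X G (fun _ => setT) mG sG (fun _ => GT) _ (pushforward P f) (pushforward P f').
apply => //.
- by apply/seteqP; split => // x _; exists 0%N.
- by move=> k; change (P (f @^-1` setT) < +oo)%E; rewrite preimage_setT probability_setT ltry.
Qed.

Lemma preimage_gen dX (X : measurableType dX) (Y : Type) (G : set (set Y)) (h : X -> Y) :
  (forall B, G B -> measurable (h @^-1` B)) ->
  forall A, <<s G >> A -> measurable (h @^-1` A).
Proof.
move=> hG A GA.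
suff: <<s G >> `<=` image_set_system setT h measurable.
  by move/(_ A GA); rewrite /image_set_system /=; rewrite setTI.
apply: smallest_sub; first exact/sigma_algebra_image/sigma_algebra_measurable.
by move=> B /hG; rewrite /image_set_system /= setTI.
Qed.

Context {R : realType}.

Definition mxG m k : set (set 'M[R]_(m,k)) :=
  \bigcup_(i in [set: 'I_m]) \bigcup_(j in [set: 'I_k])
        preimage_set_system setT (fun M : 'M[R]_(m, k) => M i j) measurable.
Notation MT m k := (g_sigma_algebraType (@mxG m k)).

Lemma entry_meas m k i j : measurable_fun setT (fun M : MT m k => M i j).
Proof.
move=> _ B mB; apply: sub_sigma_algebra; exists i => //; exists j => //; exists B => //.
Qed.

Lemma meas_into_MT dX (X : measurableType dX) m k (h : X -> MT m k) :
  (forall i j, measurable_fun setT (fun x => h x i j)) -> measurable_fun setT h.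
Proof.
move=> hm; apply: (@measurability _ _ _ _ setT h (mxG m k)) => //. 
move=> _ [B [i _ [j _ [C mC <-]]] <-].
rewrite (_ : _ `&` _ = setT `&` (fun x => h x i j) @^-1` C); first exact: hm.
by apply/seteqP; split => x /=; rewrite /preimage /=; tauto.
Qed.

Context {dT : measure_display} {T : measurableType dT}.

Lemma random_mx_meas m k (W' : T -> 'M[R]_(m,k)) :
  random_mx W' -> measurable_fun setT (W' : T -> MT m k).
Proof. by move=> rW; apply: meas_into_MT => i j; exact: rW. Qed.

Lemma mx_gen_meas m k (W' : T -> 'M[R]_(m,k)) :
  random_mx W' -> mx_gen W' `<=` measurable.
Proof.
move=> /random_mx_meas mW _ [B mB <-].
exact: (mW measurableT B mB).
Qed.

Lemma rnet_events_meas k (N : @rnet R dT T k) :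
  rnet_ok N -> rnet_events N `<=` measurable.
Proof.
elim: N => [_ A []|k0 k' sig W' N IH] /= [_ rW okN] A [].
- exact: mx_gen_meas.
- exact: IH.
Qed.

Fixpoint wmeas {dX} {X : measurableType dX} (pi : X -> T) k (N : @rnet R dT T k) : Prop :=
  match N with
  | ROut => True
  | RLayer _ _ sig W' N' => [/\ measurable_fun setT sig,
      (forall i j, measurable_fun setT (fun p => W' (pi p) i j)) & wmeas pi _ N']
  end.

Lemma rnet_eval_meas dX (X : measurableType dX) (pi : X -> T) k (N : @rnet R dT T k) :
  wmeas pi k N -> forall Z : X -> 'cV[R]_k,
  (forall i j, measurable_fun setT (fun p => Z p i j)) ->
  measurable_fun setT (fun p => rnet_eval N (pi p) (Z p)).
Proof.
elim: N => [|k0 k' sig W' N IH] /=.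
- by move=> _ Z hZ; exact: hZ.
- case=> msig mW wN Z hZ; apply: (IH wN) => i j.
  under eq_fun do rewrite !mxE.
  apply: (measurableT_comp msig).
  apply: measurable_sum => l; apply: measurable_funM; [exact: mW| exact: hZ].
Qed.

Lemma wmeas_of dX (X : measurableType dX) (pi : X -> T) k (N : @rnet R dT T k) :
  rnet_ok N -> (forall A, rnet_events N A -> measurable (pi @^-1` A)) -> wmeas pi k N.
Proof.
elim: N => [|k0 k' sig W' N IH] //= [msig rW okN] hA; split => //; last first.
  by apply: IH => // A eA; apply: hA; right.
move=> i j _ B mB; rewrite setTI.
have : mx_gen W' (W' @^-1` ((fun M : 'M[R]_(k', k0) => M i j) @^-1` B)).
  exists (setT `&` (fun M : 'M[R]_(k', k0) => M i j) @^-1` B).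
    by apply: sub_sigma_algebra; exists i => //; exists j => //; exists B.
  by rewrite setTI; apply/seteqP; split => x /=; rewrite /preimage /=; tauto.
by move=> /(fun h => hA _ (or_introl h)).
Qed.


Section Main.
Context (P : probability T R) (d n w s d2 : nat) (sigma : R -> R)
  (W : T -> 'M[R]_(d2, w * d)) (g : @rnet R dT T (nwin n w s * d2)).
Hypotheses (msig : measurable_fun setT sigma) (rW : random_mx W) (okg : rnet_ok g).
Variable V : 'M[R]_(w * d).

Local Notation T1 := (g_sigma_algebraType (rnet_events g)).
Local Notation T2 := (MT d2 (w * d)).
Local Notation X := (T1 * T2)%type.

Definition Phi (p : X) : n.-tuple 'cV[R]_d -> R :=
  fun x => rnet_eval g p.1 (@conv_layer R d n w s d2 sigma p.2 x).

Lemma Phi_meas A : fun_sigma A -> measurable (Phi @^-1` A).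
Proof.
apply: preimage_gen => _ [x _ [B mB <-]].
have wg : wmeas (fst : X -> T) _ g.
  apply: (@wmeas_of _ X fst _ g okg) => A' eA'.
  rewrite (_ : fst @^-1` A' = A' `*` setT); last first.
    by apply/seteqP; split => p /=; rewrite /preimage /=; tauto.
  apply: measurableX => //; exact: sub_sigma_algebra.
have hZ : forall i j, measurable_fun setT
    (fun p : X => (@conv_layer R d n w s d2 sigma p.2 x) i j).
  move=> i j; rewrite (ord1 j) /conv_layer.
  case/mxvec_indexP: i => a c.
  under eq_fun do rewrite mxE mxvecE !mxE.
  apply: (measurableT_comp msig).
  apply: measurable_sum => l; apply: measurable_funM; last exact: measurable_cst.
  exact: (measurableT_comp (entry_meas _ _ c l) (@measurable_snd _ _ T1 T2)).
have := rnet_eval_meas _ _ _ _ _ wg _ hZ measurableT B mB.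
rewrite setTI => h.
rewrite (_ : Phi @^-1` _ = (fun p : X => rnet_eval g p.1
    (@conv_layer R d n w s d2 sigma p.2 x)) @^-1` B) //.
by rewrite setTI.
Qed.

Lemma id1_meas : measurable_fun setT (fun om : T => (om : T1)).
Proof.
move=> _ B mB; rewrite setTI.
apply: (preimage_gen _ _ _ (rnet_events g) (fun om : T => (om : T1))) => //.
by move=> B' /(rnet_events_meas _ g okg).
Qed.

Lemma m1_meas : measurable_fun setT (fun om : T => ((om : T1), (W om : T2))).
Proof.
apply: measurable_fun_pair; [exact: id1_meas | exact: random_mx_meas].
Qed.

Lemma m2_meas : measurable_fun setT (fun om : T => ((om : T1), (W om *m V : T2))).
Proof.
apply: measurable_fun_pair; first exact: id1_meas.
apply: meas_into_MT => i j; under eq_fun do rewrite mxE.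
apply: measurable_sum => l; apply: measurable_funM; [exact: rW | exact: measurable_cst].
Qed.

Lemma rm_meas : measurable_fun setT (fun M : T2 => (M *m V : T2)).
Proof.
apply: meas_into_MT => i j; under eq_fun do rewrite mxE.
apply: measurable_sum => l; apply: measurable_funM; [exact: entry_meas | exact: measurable_cst].
Qed.


Lemma rect_eq (hind : indep_sigma P (rnet_sigma g) (mx_gen W))
  (hV : same_law P (@mx_sigma R d2 (w * d)) W (fun om => W om *m V))
  (A : set T1) (B : set T2) : measurable A -> measurable B ->
  P ((fun om : T => ((om : T1), (W om : T2))) @^-1` (A `*` B)) =
  P ((fun om : T => ((om : T1), (W om *m V : T2))) @^-1` (A `*` B)).
Proof.
move=> mA mB.
change (P (A `&` W @^-1` B) = P (A `&` (fun om => W om *m V) @^-1` B)).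
have g1 : mx_gen W (W @^-1` B) by exists B => //; rewrite setTI.
have g2 : mx_gen W ((fun om => W om *m V) @^-1` B).
  exists (setT `&` (fun M : T2 => (M *m V : T2)) @^-1` B).
    exact: (rm_meas measurableT B mB).
  by rewrite !setTI.
rewrite (hind _ _ mA g1) (hind _ _ mA g2).
by rewrite (hV B mB).
Qed.

Lemma main_law (hind : indep_sigma P (rnet_sigma g) (mx_gen W))
  (hV : same_law P (@mx_sigma R d2 (w * d)) W (fun om => W om *m V))
  (A : set (n.-tuple 'cV[R]_d -> R)) : fun_sigma A ->
  P ((fun om : T => Phi ((om : T1), (W om : T2))) @^-1` A) =
  P ((fun om : T => Phi ((om : T1), (W om *m V : T2))) @^-1` A).
Proof.
move=> hA.
have key := pf_unique _ _ _ _ _ P _ _ m1_meas m2_meas _ (measurable_prod_measurableType _ _).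
change (P ((fun om : T => ((om : T1), (W om : T2))) @^-1` (Phi @^-1` A)) =
  P ((fun om : T => ((om : T1), (W om *m V : T2))) @^-1` (Phi @^-1` A))).
apply: key; last exact: Phi_meas hA.
- move=> _ _ [A1 mA1 [B1 mB1 <-]] [A2 mA2 [B2 mB2 <-]]; rewrite -setXI.
  by exists (A1 `&` A2); [exact: measurableI | exists (B1 `&` B2) => //; exact: measurableI].
- by exists setT => //; exists setT => //; rewrite setXTT.
- by move=> _ [A1 mA1 [B1 mB1 <-]]; exact: rect_eq.
Qed.
End Main.
End Aux.
Section Lin.
Context {R : realType}.

Lemma L_entry w d (B : 'M[R]_d) a b a' c :
  lin_mx (@mulmxr R w d d B) (mxvec_index a b) (mxvec_index a' c) = (a == a')%:R * B b c.
Proof.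
have := congr1 (fun M : 'rV[R]_(w * d) => M 0 (mxvec_index a' c)) (mul_rV_lin (@mulmxr R w d d B) (delta_mx 0 (mxvec_index a b))).
rewrite vec_mx_delta mxvecE /= -rowE mxE => ->.
rewrite mxE (bigD1 b) //= big1 ?addr0 => [|l lb]; rewrite mxE.
  by rewrite eqxx andbT eq_sym.
by rewrite (negbTE lb) andbF mul0r.
Qed.

Lemma L_tr w d (B : 'M[R]_d) :
  (lin_mx (@mulmxr R w d d B))^T = lin_mx (@mulmxr R w d d B^T).
Proof.
apply/matrixP => k k'; case/mxvec_indexP: k => a c; case/mxvec_indexP: k' => a' b.
by rewrite mxE !L_entry mxE eq_sym.
Qed.

Lemma L_orth w d (B : 'M[R]_d) : B *m B^T = 1%:M ->
  lin_mx (@mulmxr R w d d B) *m (lin_mx (@mulmxr R w d d B))^T = 1%:M.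
Proof.
move=> hB; rewrite L_tr; apply/row_matrixP => k.
rewrite row_mul rowE mul_rV_lin /= mul_rV_lin /= mxvecK -mulmxA hB mulmx1 vec_mxK.
by rewrite rowE mulmx1.
Qed.

Lemma orth_inv d (U : 'M[R]_d) : orthogonal_mx U -> invmx U = U^T /\ U *m U^T = 1%:M.
Proof.
rewrite /orthogonal_mx => hU.
have uU : U \in unitmx := (mulmx1_unit hU).2.
split; last exact: mulmx1C.
by rewrite -[U^T]mulmx1 -(mulmxV uU) mulmxA hU mul1mx.
Qed.

Definition Vmx w {d} (U : 'M[R]_d) : 'M[R]_(w * d) :=
  (lin_mx (@mulmxr R w d d (invmx U)^T))^T.

Lemma Vmx_orth w d (U : 'M[R]_d) : orthogonal_mx U -> orthogonal_mx (Vmx w U).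
Proof.
move=> /orth_inv [hi hU]; rewrite /orthogonal_mx /Vmx hi trmxK.
by apply: L_orth; rewrite trmxK.
Qed.

Lemma nth_act d n (U' : 'M[R]_d) (x : n.-tuple 'cV[R]_d) k :
  nth 0 (tval (pts_act U' x)) k = U' *m nth 0 (tval x) k.
Proof.
rewrite /pts_act /=; case: (ltnP k (size x)) => hk.
  by rewrite (nth_map 0).
by rewrite !nth_default ?size_map // mulmx0.
Qed.

Lemma patch_act d n w s (U' : 'M[R]_d) (x : n.-tuple 'cV[R]_d) i :
  Defs.patch w s (pts_act U' x) i = (lin_mx (@mulmxr R w d d U'^T))^T *m Defs.patch w s x i.
Proof.
rewrite /Defs.patch.
set Mx := \matrix_(j < w, c < d) (nth 0 (tval x) (i * s + j)) c ord0.
have -> : \matrix_(j < w, c < d) (nth 0 (tval (pts_act U' x)) (i * s + j)) c ord0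
    = Mx *m U'^T.
  apply/matrixP => j c; rewrite !mxE nth_act mxE; apply: eq_bigr => l _.
  by rewrite !mxE mulrC.
by rewrite -trmx_mul (mul_vec_lin (@mulmxr R w d d U'^T)).
Qed.

Lemma conv_act d n w s d2 sigma (M : 'M[R]_(d2, w * d)) (U : 'M[R]_d) x :
  @conv_layer R d n w s d2 sigma M (pts_act (invmx U) x)
  = @conv_layer R d n w s d2 sigma (M *m Vmx w U) x.
Proof.
rewrite /conv_layer; congr (mxvec _)^T; apply/matrixP => i c.
by rewrite mxE [in RHS]mxE patch_act /Vmx mulmxA.
Qed.

End Lin.

Theorem lemma2 (R : realType) (dT : measure_display) (T : measurableType dT)
  (P : probability T R) (d n w s d2 : nat) (sigma : R -> R)
  (W : T -> 'M[R]_(d2, w * d)) (g : @rnet R dT T (nwin n w s * d2)) :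
  (0 < s)%N -> (w <= n)%N -> (s %| n - w)%N ->
  measurable_fun setT sigma ->
  regular_random_mx P W ->
  rnet_ok g ->
  indep_sigma P (rnet_sigma g) (mx_gen W) ->
  let f : T -> n.-tuple 'cV[R]_d -> R :=
    fun om x => rnet_eval g om (@conv_layer R d n w s d2 sigma (W om) x) in
  forall U : 'M[R]_d, SO_mx U ->
    same_law P (@fun_sigma R (n.-tuple 'cV[R]_d)) f
      (fun om x => f om (pts_act (invmx U) x)).
Proof.
move=> _ _ _ msig [rW hreg] okg hind f U [oU _] A hA.
have h := main_law P d n w s d2 sigma W g msig rW okg (Vmx w U) hind
  (hreg _ (Vmx_orth w _ _ oU)) A hA.
have e : (fun om x => f om (pts_act (invmx U) x)) = (fun om x =>
    rnet_eval g om (@conv_layer R d n w s d2 sigma (W om *m Vmx w U) x)).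
  by apply/funext => om; apply/funext => x; rewrite /f conv_act.
by rewrite e; exact: h.
Qed.
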